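(* Let $\mathcal{G}=\langle S,A,T,s_0,F\rangle$ be a two-player turn-based deterministic reachability game. For any disjoint $X,Y\subseteq\mathrm{Win}_2(\mathcal{G},F)\setminus F$, we have $\mathrm{DASWin}_1(X,Y)\subseteq\mathrm{DSWin}_1(X,Y)$.
   Context: A two-player turn-based deterministic reachability game is a tuple $\mathcal{G}=\langle S,A,T,s_0,F\rangle$: $S$ finite, partitioned into P1 states $S_1$ and P2 states $S_2$; $A=A_1\cup A_2$ (P1 and P2 actions); $T:(S_1\times A_1)\cup(S_2\times A_2)\to S$ deterministic, possibly partial ($a$ enabled at $s$ iff $T(s,a)$ defined; every state has an enabled action); $s_0$ initial; $F\subseteq S$ a set of sink states (P2's goal). For a target $R$: $Z_0=R$, $Z_{k+1}=Z_k\cup\{s\in S_1:T(s,a)\in Z_k\ \forall\text{ enabled }a\}\cup\{s\in S_2:T(s,a)\in Z_k\text{ for some enabled }a\}$, $\mathrm{Win}_2(\mathcal{G},R)=\bigcup_kZ_k$, $\mathrm{rank}_{\mathcal{G},R}(s)=\min\{k:s\in Z_k\}$ ($\infty$ if none). For disjoint $X,Y\subseteq\mathrm{Win}_2(\mathcal{G},F)\setminus F$ (traps $X$, fake targets $Y$): the true game $\mathcal{G}^1_{X,Y}$ has states $S$ and transitions $T_{X,Y}(q,a)=T(q,a)$ if $q\notin X\cup Y$, $T_{X,Y}(q,a)=q$ if $q\in X\cup Y$; P2's perceptual game $\mathcal{G}^2_{X,Y}$ has transitions $T$ and goal $F\cup Y$, with $\mathrm{rank}_{\mathcal{G}^2_{X,Y}}:=\mathrm{rank}_{\mathcal{G},F\cup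 Y}$. A memoryless randomized strategy of player $i$ maps each $q\in S_i$ to a distribution over enabled actions (deterministic if all are point masses); a pair of strategies and a start state determine the set of generated paths and a probability measure on paths of $\mathcal{G}^1_{X,Y}$. Sure-winning notion: for $q\in S_2\cap\mathrm{Win}_2(\mathcal{G},F)\setminus(F\cup Y)$, $\mathsf{SRActs}_{X,Y}(q)=\{a\text{ enabled}:\mathrm{rank}_{\mathcal{G}^2_{X,Y}}(T(q,a))<\mathrm{rank}_{\mathcal{G}^2_{X,Y}}(q)\}$, and all enabled actions at every other state; a memoryless deterministic strategy is subjectively rationalizable if it always picks an action in $\mathsf{SRActs}_{X,Y}$; a memoryless deterministic P1 strategy $\pi_1$ is stealthy deceptive sure winning at $s$ if it is subjectively rationalizable and for every subjectively rationalizable memoryless deterministic P2 strategy $\pi_2$ every path from $s$ generated by $(\pi_1,\pi_2)$ in $\mathcal{G}^1_{X,Y}$ visits $X\cup Y$ within finitely many steps; $\mathrm{DSWin}_1(X,Y)$ is the set of states where such a strategy exists. Almost-sure notion: for $q\in S_2\cap\mathrm{Win}_2(\mathcal{G},F)\setminus F$, $\widehat{\mathsf{SRActs}}(q)=\{a\text{ enabled}:T(q,a)\in\mathrm{Win}_2(\mathcal{G},F)\}$, and all enabled actions at every other state; a memoryless randomized strategy is subjectively rationalizable if at each of its player's states $q$ its support is a nonempty subset of $\widehat{\mathsf{SRActs}}(q)$; a memoryless randomized P1 strategy $\pi_1$ is stealthy deceptive almost-sure winning at $s$ if it is subjectively rationalizable and for every subjectively rationalizable memoryless randomized P2 strategy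 $\pi_2$ the path of $\mathcal{G}^1_{X,Y}$ from $s$ under $(\pi_1,\pi_2)$ visits $X\cup Y$ with probability one; $\mathrm{DASWin}_1(X,Y)$ is the set of states where such a strategy exists. *)

(* Defs.v *)
From HB Require Import structures.
From mathcomp Require Import all_boot all_order all_algebra.
From mathcomp Require Import boolp reals.
Set Implicit Arguments. Unset Strict Implicit. Unset Printing Implicit Defensive.
Import Order.TTheory GRing.Theory Num.Theory.
Local Open Scope ring_scope.

(* S1 = P1 states (P2 states S2 = complement), A1/A2 = P1/P2 actions,
   trans = partial transition function T (None = undefined), goal = F. *)
Record game (S A : finType) := Game {
  S1 : {set S};
  A1 : {set A};
  A2 : {set A};
  trans : S -> A -> option S;
  init : S;
  goal : {set S} }.

Section Games.
Variables (S A : finType) (G : game S A).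

Definition enabled (s : S) (a : A) : bool := trans G s a != None.

Definition succ_in (s : S) (a : A) (Z : {set S}) : bool :=
  if trans G s a is Some t then t \in Z else false.

Definition valid_game : Prop :=
  [/\ A1 G :|: A2 G = [set: A],
      (forall s a, enabled s a ->
         ((s \in S1 G) && (a \in A1 G)) || ((s \notin S1 G) && (a \in A2 G))),
      (forall s, exists a, enabled s a) &
      (forall f a, f \in goal G -> enabled f a -> trans G f a = Some f)].

Fixpoint attr (R : {set S}) (k : nat) : {set S} :=
  match k with
  | 0 => R
  | k'.+1 =>
      let Z := attr R k' in
      Z :|: [set s | (s \in S1 G) && [forall a, enabled s a ==> succ_in s a Z]]
        :|: [set s | (s \notin S1 G) && [exists a, succ_in s a Z]]
  end.

Definition inWin2 (R : {set S}) (s : S) : Prop := exists k, s \in attr R k.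

(* rank_{G,R}(s) : None stands for infinity *)
Definition rank (R : {set S}) (s : S) : option nat :=
  match pselect (exists k, (fun k => s \in attr R k) k) with
  | left h => Some (@ex_minn (fun k => s \in attr R k) h)
  | right _ => None
  end.

Definition rank_lt (x y : option nat) : bool :=
  match x, y with
  | Some m, Some n => (m < n)%N
  | Some _, None => true
  | None, _ => false
  end.

Definition SRActs (Y : {set S}) (q : S) (a : A) : Prop :=
  enabled q a /\
  ((q \notin S1 G) /\ inWin2 (goal G) q /\ q \notin goal G :|: Y ->
     exists t, trans G q a = Some t /\
       rank_lt (rank (goal G :|: Y) t) (rank (goal G :|: Y) q)).

Definition SRActsHat (q : S) (a : A) : Prop :=
  enabled q a /\
  ((q \notin S1 G) /\ inWin2 (goal G) q /\ q \notin goal G ->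
     exists t, trans G q a = Some t /\ inWin2 (goal G) t).

(* memoryless deterministic strategies: only values at the player's own
   states matter; p1 = true for player 1, false for player 2 *)
Definition dstrat := S -> A.

Definition SR_det (Y : {set S}) (p1 : bool) (sg : dstrat) : Prop :=
  forall q, (q \in S1 G) = p1 -> SRActs Y q (sg q).

(* one step in the true game G^1_{X,Y} under a deterministic profile *)
Definition next (X Y : {set S}) (sg1 sg2 : dstrat) (q : S) : S :=
  if q \in X :|: Y then q
  else odflt q (trans G q (if q \in S1 G then sg1 q else sg2 q)).

Definition DSWin (X Y : {set S}) (s : S) : Prop :=
  exists sg1, SR_det Y true sg1 /\
    forall sg2, SR_det Y false sg2 ->
      exists n, iter n (next X Y sg1 sg2) s \in X :|: Y.

Variable R : realType.
Definition rstrat := S -> {ffun A -> R}.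

Definition SR_rand (p1 : bool) (pi : rstrat) : Prop :=
  forall q, (q \in S1 G) = p1 ->
    [/\ (forall a, 0 <= pi q a), \sum_a pi q a = 1 &
        (forall a, 0 < pi q a -> SRActsHat q a)].

(* probability, in the Markov chain induced on G^1_{X,Y} by (pi1, pi2),
   of visiting X :|: Y within n steps from q *)
Fixpoint preach (X Y : {set S}) (pi1 pi2 : rstrat) (n : nat) (q : S) : R :=
  if q \in X :|: Y then 1
  else match n with
       | 0 => 0
       | n'.+1 =>
           \sum_a (if q \in S1 G then pi1 q a else pi2 q a) *
                  (if trans G q a is Some t then preach X Y pi1 pi2 n' t else 0)
       end.

(* X :|: Y is visited with probability one: sup_n preach n s = 1 *)
Definition visits_as (X Y : {set S}) (pi1 pi2 : rstrat) (s : S) : Prop :=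
  forall eps : R, 0 < eps -> exists n, 1 - eps < preach X Y pi1 pi2 n s.

Definition DASWin (X Y : {set S}) (s : S) : Prop :=
  exists pi1, SR_rand true pi1 /\
    forall pi2, SR_rand false pi2 -> visits_as X Y pi1 pi2 s.

End Games.

(* Main.v *)
Require Import Defs.
From HB Require Import structures.
From mathcomp Require Import all_boot all_order all_algebra.
From mathcomp Require Import boolp reals.
Set Implicit Arguments. Unset Strict Implicit. Unset Printing Implicit Defensive.
Import Order.TTheory GRing.Theory Num.Theory.

Lemma fin_uniform (T : finType) (P : T -> nat -> Prop) :
  (forall x k k', (k <= k')%N -> P x k -> P x k') ->
  (forall x, exists k, P x k) -> exists K, forall x, P x K.
Proof.
move=> mono ex.
suff: forall l : seq T, exists K, forall x, x \in l -> P x K.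
  by case/(_ (enum T)) => K HK; exists K => x; apply: HK; rewrite mem_enum.
elim=> [|y l [K HK]]; first by exists 0%N.
case: (ex y) => k Hk; exists (maxn k K) => x; rewrite inE => /orP [/eqP -> | /HK h].
  by apply: mono Hk; exact: leq_maxl.
by apply: mono h; exact: leq_maxr.
Qed.

Lemma chain_mono (T : finType) (f : nat -> {set T}) :
  (forall k, f k \subset f k.+1) -> forall k k', (k <= k')%N -> f k \subset f k'.
Proof.
move=> st k k' /subnKC <-; elim: (k' - k)%N => [|d IH]; first by rewrite addn0.
by apply: subset_trans IH _; rewrite addnS.
Qed.

Lemma succ_in_mono (S A : finType) (G : game S A) s a (Z Z' : {set S}) :
  Z \subset Z' -> succ_in G s a Z -> succ_in G s a Z'.
Proof. by move=> sub; rewrite /succ_in; case: trans => // t; apply: (subsetP sub). Qed.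

Lemma attr_step (S A : finType) (G : game S A) Rr k : attr G Rr k \subset attr G Rr k.+1.
Proof. by rewrite /= -setUA subsetUl. Qed.

Lemma win_union (S A : finType) (G : game S A) (Y : {set S}) :
  (forall y, y \in Y -> inWin2 G (goal G) y) ->
  forall k t, t \in attr G (goal G :|: Y) k -> inWin2 G (goal G) t.
Proof.
move=> HY.
have [K HK] : exists K, forall y, y \in Y -> y \in attr G (goal G) K.
  apply: (@fin_uniform _ (fun y k => y \in Y -> y \in attr G (goal G) k)).
    move=> x k k' le h /h; apply: (subsetP (chain_mono (@attr_step _ _ G _) le)).
  move=> x; case: (boolP (x \in Y)) => hx; last by exists 0%N.
  by case: (HY x hx) => k hk; exists k.
suff sub: forall k, attr G (goal G :|: Y) k \subset attr G (goal G) (K + k).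
  by move=> k t /(subsetP (sub k)) h; exists (K + k)%N.
elim=> [|k IH].
  apply/subsetP => x; rewrite /= inE addn0 => /orP [h|/HK //].
  by apply: (subsetP (chain_mono (@attr_step _ _ G _) (leq0n K))).
rewrite addnS; apply/subsetP => x; rewrite /= !inE => /orP [/orP [h|h]|h].
- by rewrite (subsetP IH x h).
- case/andP: h => h1 /forallP h2; apply/orP; left; apply/orP; right.
  rewrite h1 /=; apply/forallP => a; apply/implyP => /(implyP (h2 a)).
  exact: succ_in_mono.
- case/andP: h => h1 /existsP [a ha]; apply/orP; right.
  rewrite h1 /=; apply/existsP; exists a; exact: succ_in_mono ha.
Qed.

Lemma win_p2 (S A : finType) (G : game S A) k q :
  q \in attr G (goal G) k -> q \notin goal G -> q \notin S1 G ->
  exists a k', succ_in G q a (attr G (goal G) k').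
Proof.
elim: k => [|k IH] /=; first by move=> ->.
rewrite !inE => /orP [/orP [h|h]|h] hg hs.
- exact: IH.
- by rewrite (negbTE hs) in h.
- by case/andP: h => _ /existsP [a ha]; exists a, k.
Qed.

Lemma choice_ex (T U : Type) (P : T -> U -> Prop) :
  (forall x, exists y, P x y) -> exists f, forall x, P x (f x).
Proof. by move/choice => [f hf]; exists f. Qed.

Section Main.
Variables (S A : finType) (G : game S A) (X Y : {set S}).

Definition okb q a := `[< SRActs G Y q a >].

Fixpoint att (k : nat) : {set S} :=
  match k with
  | 0 => X :|: Y
  | k'.+1 => att k' :|: [set q | (q \in S1 G) && [exists a, enabled G q a && succ_in G q a (att k')]]
       :|: [set q | (q \notin S1 G) && [forall a, okb q a ==> succ_in G q a (att k')]]
  end.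

Lemma att_step k : att k \subset att k.+1.
Proof. by rewrite /= -setUA subsetUl. Qed.

Lemma att0 k : X :|: Y \subset att k.
Proof. exact: (chain_mono att_step (leq0n k)). Qed.

End Main.

Theorem theorem7 (R : realType) (S A : finType) (G : game S A)
  (X Y : {set S}) :
  valid_game G ->
  [disjoint X & Y] ->
  (forall q, q \in X :|: Y -> inWin2 G (goal G) q /\ q \notin goal G) ->
  forall s, DASWin G R X Y s -> DSWin G X Y s.
Proof.
Local Open Scope ring_scope.
move=> [_ _ Hen _] _ HXY s [pi1 [_ Hpi1]].
have HY : forall y, y \in Y -> inWin2 G (goal G) y.
  by move=> y hy; case: (HXY y) => //; rewrite inE hy orbT.
case: (pselect (exists k, s \in att G X Y k)) => [[k0 hk0] | Hnot].
- have Hex : forall q, exists a, enabled G q a /\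
     (forall k, q \in S1 G -> q \in att G X Y k.+1 -> q \notin att G X Y k ->
        succ_in G q a (att G X Y k)).
    move=> q.
    case: (pselect (exists k, [/\ q \in S1 G, q \in att G X Y k.+1 & q \notin att G X Y k]))
      => [[k [h1 h2 h3]] | hn].
      move: (h2); rewrite /= !inE (negbTE h3) h1 /= => /orP [/existsP [a /andP [ha1 ha2]] | //].
      exists a; split => // k' _ h2' h3'.
      case: (ltngtP k k') => [lt|lt|<- //].
        by case/negP: h3'; apply: (subsetP (chain_mono (att_step G X Y) lt)).
      by case/negP: h3; apply: (subsetP (chain_mono (att_step G X Y) lt)).
    case: (Hen q) => a ha; exists a; split => // k h1 h2 h3; by exfalso; apply: hn; exists k; split.
  have [sg1 Hsg1] := choice_ex Hex.
  exists sg1; split; first by move=> q hq; split; [exact: (Hsg1 q).1 | case=> /negP; rewrite hq].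
  move=> sg2 Hsg2.
  suff: forall k q, q \in att G X Y k -> exists n, iter n (Defs.next G X Y sg1 sg2) q \in X :|: Y
    by move=> h; exact: h hk0.
  elim => [|k IH] q hq; first by exists 0%N.
  case: (boolP (q \in att G X Y k)) => hqk; first exact: IH.
  have hxy : q \notin X :|: Y by apply: contra hqk; apply: (subsetP (att0 _ _ _ k)).
  have [t [ht htk]] : exists t, trans G q (if q \in S1 G then sg1 q else sg2 q) = Some t
        /\ t \in att G X Y k.
    case: (boolP (q \in S1 G)) => hs.
      have := (Hsg1 q).2 k hs hq hqk; rewrite /succ_in; case: trans => // t ht; by exists t.
    move: hq; rewrite /= !inE (negbTE hqk) (negbTE hs) /= => /forallP /(_ (sg2 q)) /implyP h.
    have: okb G Y q (sg2 q) by apply/asboolP; apply: Hsg2; rewrite (negbTE hs).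
    move/h; rewrite /succ_in; case: trans => // t ht'; by exists t.
  case: (IH t htk) => n hn; exists n.+1; rewrite iterSr /Defs.next (negbTE hxy) ht /=.
  exact: hn.
- have Hex : forall q, exists a, SRActsHat G q a /\
      (q \notin S1 G -> (forall k, q \notin att G X Y k) ->
         exists t, trans G q a = Some t /\ forall k, t \notin att G X Y k).
    move=> q.
    case: (pselect (q \notin S1 G /\ forall k, q \notin att G X Y k)) => [[hs hC] | hn].
      have: exists a, okb G Y q a /\ forall k, ~~ succ_in G q a (att G X Y k).
        apply: contrapT => hne.
        have [K HK]: exists K, forall a, okb G Y q a -> succ_in G q a (att G X Y K).
          apply: (@fin_uniform _ (fun a k => okb G Y q a -> succ_in G q a (att G X Y k))).
            move=> a k k' le h /h; apply: succ_in_mono; apply: (chain_mono _ le) => j; exact: att_step.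
          move=> a; apply: contrapT => hna; apply: hne; exists a; split.
            by apply: contrapT => no; apply: hna; exists 0%N => /no.
          by move=> k; apply/negP => hs'; apply: hna; exists k => _.
        case/negP: (hC K.+1); rewrite /= !inE; apply/orP; right; rewrite hs /=.
        by apply/forallP => a; apply/implyP; exact: HK.
      case=> a [/asboolP [hen hcond] hnot].
      exists a; split.
        split => // [[_ [hw hg]]].
        have hqY : q \notin goal G :|: Y.
          rewrite inE negb_or hg /=; apply: contra (hC 0%N) => hy; by rewrite /= inE hy orbT.
        case: (hcond (conj hs (conj hw hqY))) => t [ht hlt]; exists t; split => //.
        move: hlt; rewrite /rank; case: pselect => [[k hk] _ | _] //=.
        exact: win_union HY k t hk.
      move=> _ _; case ht: (trans G q a) => [t|]; last by rewrite /enabled ht in hen.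
      exists t; split => // k; have := hnot k; by rewrite /succ_in ht.
    case: (pselect (q \notin S1 G /\ inWin2 G (goal G) q /\ q \notin goal G))
      => [[hs [[k hk] hg]] | hn'].
      case: (win_p2 hk hg hs) => a [k' ha].
      case ht: (trans G q a) => [t|]; last by rewrite /succ_in ht in ha.
      rewrite /succ_in ht in ha.
      exists a; split; last by move=> h1 h2; exfalso; apply: hn; split.
      split; first by rewrite /enabled ht.
      by move=> _; exists t; split => //; exists k'.
    case: (Hen q) => a ha; exists a; split.
      by split => // hc; exfalso; apply: hn'.
    by move=> h1 h2; exfalso; apply: hn; split.
  have [b Hb] := choice_ex Hex.
  pose pi2 : rstrat S A R := fun q => [ffun a => if a == b q then 1%R else 0%R].
  have Hpi2 : SR_rand G false pi2.
    move=> q hq; split.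
    - by move=> a; rewrite ffunE; case: eqP => _ //=; rewrite ler01.
    - rewrite (bigD1 (b q)) //= ffunE eqxx big1 ?addr0 // => a /negbTE.
      by rewrite ffunE => ->.
    - move=> a; rewrite ffunE; case: eqP => [-> _|_]; first exact: (Hb q).1.
      by rewrite ltxx.
  have key : forall n q, (forall k, q \notin att G X Y k) -> preach G X Y pi1 pi2 n q = 0.
    elim=> [|n IH] q hC /=; have hxy : q \notin X :|: Y := hC 0%N; rewrite (negbTE hxy) //.
    apply: big1 => a _; case: (boolP (q \in S1 G)) => hs.
      case ht: (trans G q a) => [t|]; last by rewrite mulr0.
      rewrite IH ?mulr0 // => k; apply/negP => htk; case/negP: (hC k.+1).
      rewrite /= !inE; apply/orP; left; apply/orP; right; rewrite hs /=.
      by apply/existsP; exists a; rewrite /enabled /succ_in ht htk.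
    rewrite ffunE; case: eqP => [->|_]; last by rewrite mul0r.
    case: ((Hb q).2 hs hC) => t [ht htC]; by rewrite ht IH ?mulr0.
  exfalso.
  have hsC : forall k, s \notin att G X Y k by move=> k; apply/negP => h; apply: Hnot; exists k.
  case: (Hpi1 pi2 Hpi2 1 ltr01) => n; by rewrite key // subrr ltxx.
Qed.
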